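(* Let $X$ be a locally connected compact metric space and let $f\colon X\to X$ be a minimal homeomorphism. If there exists a Borel probability measure on $X$ which is inner-distal with respect to $f$, then $f$ is inner-distal.
   Context: A homeomorphism $f\colon X\to X$ is minimal if every orbit $\{f^n(x)\colon n\in\mathbb{Z}\}$ is dense in $X$. The proximal cell of $x$ is $\mathcal{P}(x)=\{y\in X\colon \inf_{n\in\mathbb{Z}} d(f^n(x),f^n(y))=0\}$; $f$ is inner-distal if $\operatorname{Int}\mathcal{P}(x)=\emptyset$ for all $x\in X$. A Borel probability measure $\mu$ is inner-distal with respect to $f$ if $\mu(\operatorname{Int}\mathcal{P}(x))=0$ for all $x\in X$. *)

(* Defs.v *)
From HB Require Import structures.
From mathcomp Require Import all_boot all_order all_algebra.
From mathcomp Require Import all_classical all_reals all_analysis.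
Set Implicit Arguments. Unset Strict Implicit. Unset Printing Implicit Defensive.
Import Order.TTheory GRing.Theory Num.Theory.
Local Open Scope classical_set_scope.
Local Open Scope ring_scope.

(* Integer iterate f^n of a homeomorphism f with inverse g:
   f^n = f o ... o f (n times) for n >= 0, and g^(-n) for n < 0. *)
Definition zit {T : Type} (f g : T -> T) (n : int) : T -> T :=
  match n with
  | Posz k => iter k f
  | Negz k => iter k.+1 g
  end.

Definition homeomorphism {X : topologicalType} (f g : X -> X) : Prop :=
  cancel f g /\ cancel g f /\ continuous f /\ continuous g.

Definition orbit {T : Type} (f g : T -> T) (x : T) : set T :=
  [set zit f g n x | n in [set: int]].

Definition minimal {X : topologicalType} (f g : X -> X) : Prop :=
  forall x : X, closure (orbit f g x) = [set: X].

Definition locally_connected (X : topologicalType) : Prop :=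
  forall (x : X) (U : set X), nbhs x U ->
    exists V : set X, [/\ open V, connected V, V x & V `<=` U].

Definition proximal_cell {R : realType} {X : metricType R} (f g : X -> X)
    (x : X) : set X :=
  [set y | inf [set mdist (zit f g n x) (zit f g n y) | n in [set: int]] = 0].

Definition inner_distal {R : realType} {X : metricType R} (f g : X -> X) : Prop :=
  forall x : X, interior (proximal_cell f g x) = set0.

Definition inner_distal_measure {R : realType} {X : metricType R}
    (f g : X -> X) (mu : set (g_sigma_algebraType (@open X)) -> \bar R) : Prop :=
  forall x : X, mu (interior (proximal_cell f g x)) = 0%E.

(* A (nonempty) metric space: the Borel sigma-algebra construction
   g_sigma_algebraType of MathComp-Analysis needs a pointed carrier.
   Nonemptiness is implied by the existence of a probability measure. *)
#[short(type="pointedMetricType")]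
HB.structure Definition PointedMetric (K : numDomainType) :=
  { M of Metric K M & isPointed M }.

(* Main.v *)
Require Import Defs.
From HB Require Import structures.
From mathcomp Require Import all_boot all_order all_algebra.
From mathcomp Require Import all_classical all_reals all_analysis.
From mathcomp Require Import zify.
From Stdlib Require Import Lia.
Import Order.TTheory GRing.Theory Num.Theory.
Local Open Scope classical_set_scope.
Local Open Scope ring_scope.

Section Zit.
Variables (T : Type) (f g : T -> T).
Hypotheses (fK : cancel f g) (gK : cancel g f).

Lemma zitS (n : int) x : zit f g (n + 1) x = f (zit f g n x).
Proof.
case: n => [k|[|k]].
- by have -> : Posz k + 1 = Posz k.+1 by rewrite -addn1.
- by rewrite /= gK.
- have -> : Negz k.+1 + 1 = Negz k by rewrite !NegzE; lia.
  by rewrite /= gK.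
Qed.

Lemma zitP (n : int) x : zit f g (n - 1) x = g (zit f g n x).
Proof. by rewrite -[in RHS](subrK 1 n) zitS fK. Qed.

Lemma zitD (m n : int) x : zit f g (m + n) x = zit f g m (zit f g n x).
Proof.
case: m => [k|k].
- elim: k => [|k IH]; first by rewrite add0r.
  have -> : Posz k.+1 = Posz k + 1 by rewrite -addn1.
  by rewrite addrAC !zitS IH.
- elim: k => [|k IH].
  + have -> : Negz 0 = 0 - 1 by [].
    by rewrite addrAC zitP add0r.
  + have -> : Negz k.+1 = Negz k - 1 by rewrite !NegzE; lia.
    by rewrite addrAC !zitP IH.
Qed.

Lemma zit0 x : zit f g 0 x = x. Proof. by []. Qed.

End Zit.

Lemma zit_cont (X : topologicalType) (f g : X -> X) (n : int) :
  continuous f -> continuous g -> continuous (zit f g n).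
Proof.
move=> cf cg; case: n => [k|k] /=.
- elim: k => [|k IH] /=; first by move=> x; exact: cvg_id.
  move=> x; apply: continuous_comp; [exact: IH|exact: cf].
- elim: k => [|k IH] /=; first by move=> x; exact: cg.
  move=> x; apply: continuous_comp; [exact: IH|exact: cg].
Qed.

Theorem theorem2p15 (R : realType) (X : pointedMetricType R) (f g : X -> X) :
  compact [set: X] ->
  locally_connected X ->
  homeomorphism f g ->
  minimal f g ->
  (exists mu : probability (g_sigma_algebraType (@open X)) R,
      inner_distal_measure f g mu) ->
  inner_distal f g.
Proof.
move=> _ _ [fK [gK [cf cg]]] hmin [mu hmu] x.
apply/eqP/negPn/negP => /set0P [u Uu].
set U := interior (proximal_cell f g x).
have oU : open U by exact: open_interior.
have cover : forall z : X, exists m : int,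
    interior (proximal_cell f g (zit f g m x)) z.
  move=> z.
  have : closure (Defs.orbit f g z) u by rewrite hmin.
  move=> /(_ U); case.
    by apply: open_nbhs_nbhs; split.
  move=> _ [[n _ <-] Un].
  exists (- n).
  have sub : zit f g n @^-1` U `<=` proximal_cell f g (zit f g (- n) x).
    move=> y /= /interior_subset; rewrite /proximal_cell /=.
    move=> <-; congr inf.
    apply/seteqP; split => r /= [m _ <-].
    - exists (m - n) => //; rewrite -!zitD //; congr mdist; congr zit; lia.
    - by exists (m + n) => //; rewrite -!zitD//; congr mdist; congr zit; lia.
  have oW : open (zit f g n @^-1` U).
    apply: open_comp => // y _; exact: zit_cont.
  by move: sub; rewrite open_subsetE //; apply.
have mO : forall A : set X, open A ->
    measurable (A : set (g_sigma_algebraType (@open X))).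
  by move=> A oA; apply: sub_sigma_algebra.
have nA : forall m : int,
    mu.-negligible (interior (proximal_cell f g (zit f g m x))
      : set (g_sigma_algebraType (@open X))).
  move=> m; apply/negligibleP; first by apply: mO; exact: open_interior.
  exact: hmu.
set A := (\bigcup_k interior (proximal_cell f g (zit f g (Posz k) x))) `|`
     (\bigcup_k interior (proximal_cell f g (zit f g (Negz k) x))).
have nU : mu.-negligible (A : set (g_sigma_algebraType (@open X))).
  by apply: negligibleU; apply: negligible_bigcup => k; exact: nA.
have nT : mu.-negligible (setT : set (g_sigma_algebraType (@open X))).
  apply: negligibleS nU.
  move=> z _; have [[k|k] hk] := cover z.
  - by left; exists k.
  - by right; exists k.
move/negligibleP : nT => /(_ measurableT).
move=> h; have := probability_setT mu; rewrite h => /eqP; rewrite eqe.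
by rewrite eq_sym oner_eq0.
Qed.
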